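(* Let $D$ be a Newton diagram in $2$ variables whose support is exactly $K=\{(a,b)\in\mathbb N_0^2: a+b<d\}$ for some integer $d\ge1$. Then $SC(D)\ge\frac{d+1}{2}$.
   Context: For $m\in\mathbb Z^n$ write $|m|=m_1+\dots+m_n$; $e_1,\dots,e_n$ is the standard basis. A Newton diagram in $n$ variables is a function $D\colon\mathbb Z^n\to\{0,P,N\}$ ($P,N$ formal symbols) whose support $K=D^{-1}(\{P,N\})$ is a finite nonempty subset of $\mathbb N_0^n$. For $a\in\mathbb Z^n$ let $E(a)=\{a,a-e_1,\dots,a-e_n\}$; $E(a)$ is a node of $D$ if the image $D(E(a))$ equals $\{P\}$, $\{N\}$, $\{0,P\}$ or $\{0,N\}$. For $n=2$: a node $E(a)$ is an interior node if no point of $E(a)$ has $D$-value $0$, an edge node if exactly one does, a vertex node if exactly two do; a vertex node is a bottom node if its two $0$-points are $a-e_1$ and $a-e_2$. The weighted surface count is $SC(D)=(\#\text{interior nodes})+\tfrac12\big((\#\text{edge nodes})+(\#\text{vertex nodes})-(\#\text{bottom nodes})\big)$. *)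

(* Defs.v *)
From HB Require Import structures.
From mathcomp Require Import all_boot all_order all_algebra.
Set Implicit Arguments. Unset Strict Implicit. Unset Printing Implicit Defensive.
Import Order.TTheory GRing.Theory Num.Theory.

Inductive sym := Zr | Ps | Ng.

Definition sym_eqb (x y : sym) : bool :=
  match x, y with Zr, Zr | Ps, Ps | Ng, Ng => true | _, _ => false end.

(* A (two-variable) diagram is a map Z^2 -> {0,P,N}; finiteness/support
   conditions are hypotheses of the theorem. *)
Definition diagram := int * int -> sym.

Definition support_is_triangle (D : diagram) (d : nat) : Prop :=
  forall m : int * int,
    D m <> Zr <-> ((0 <= m.1)%R /\ (0 <= m.2)%R /\ (m.1 + m.2 < Posz d)%R).

Definition E (a : int * int) : seq (int * int) :=
  [:: a; ((a.1 - 1)%R, a.2); (a.1, (a.2 - 1)%R)].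

Definition img_has (D : diagram) (a : int * int) (v : sym) : bool :=
  has (fun p => sym_eqb (D p) v) (E a).

Definition is_node (D : diagram) (a : int * int) : bool :=
  let z := img_has D a Zr in
  let p := img_has D a Ps in
  let n := img_has D a Ng in
  [|| [&& ~~ z, p & ~~ n], [&& ~~ z, ~~ p & n],
      [&& z, p & ~~ n] | [&& z, ~~ p & n]].

Definition nzeros (D : diagram) (a : int * int) : nat :=
  count (fun p => sym_eqb (D p) Zr) (E a).

Definition is_interior (D : diagram) a := is_node D a && (nzeros D a == 0).
Definition is_edge (D : diagram) a := is_node D a && (nzeros D a == 1).
Definition is_vertex (D : diagram) a := is_node D a && (nzeros D a == 2).
Definition is_bottom (D : diagram) (a : int * int) :=
  [&& is_vertex D a, sym_eqb (D ((a.1 - 1)%R, a.2)) Zr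
    & sym_eqb (D (a.1, (a.2 - 1)%R)) Zr].

(* Number of a in the box [0,B]^2 satisfying P.  When the support of D lies in
   {m in N0^2 : m1 + m2 < B}, every node E(a) has a in [0,B]^2 (a node contains
   a point with nonzero value), so this counts all such nodes. *)
Definition count_box (P : int * int -> bool) (B : nat) : nat :=
  \sum_(i < B.+1) \sum_(j < B.+1) P (Posz i, Posz j).

Definition SC (D : diagram) (B : nat) : rat :=
  ((count_box (is_interior D) B)%:R
   + ((count_box (is_edge D) B)%:R + (count_box (is_vertex D) B)%:R
      - (count_box (is_bottom D) B)%:R) / 2%:R)%R.

(* Main.v *)
Require Import Defs.
From HB Require Import structures.
From mathcomp Require Import all_boot all_order all_algebra.
From mathcomp Require Import zify ring lra.
Import Order.TTheory GRing.Theory Num.Theory.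

Definition node3 (x y z : sym) : bool :=
  let h v := has (fun w => sym_eqb w v) [:: x; y; z] in
  let zz := h Zr in let p := h Ps in let n := h Ng in
  [|| [&& ~~ zz, p & ~~ n], [&& ~~ zz, ~~ p & n],
      [&& zz, p & ~~ n] | [&& zz, ~~ p & n]].
Definition nz3 x y z := count (fun w => sym_eqb w Zr) [:: x; y; z].
Definition F3 x y z : nat := (2 * (node3 x y z && (nz3 x y z == 0)) +
  (node3 x y z && (nz3 x y z == 1)) + (node3 x y z && (nz3 x y z == 2)))%N.
Definition G3 x y z : bool := [&& node3 x y z && (nz3 x y z == 2), sym_eqb y Zr & sym_eqb z Zr].

Lemma key3 (D : diagram) (x1 x2 : int) :
  (2 * is_interior D (x1,x2) + is_edge D (x1,x2) + is_vertex D (x1,x2))%N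
  = F3 (D (x1,x2)) (D (x1-1,x2)%R) (D (x1,x2-1)%R).
Proof. reflexivity. Qed.

Lemma keyb (D : diagram) (x1 x2 : int) :
  is_bottom D (x1,x2) = G3 (D (x1,x2)) (D (x1-1,x2)%R) (D (x1,x2-1)%R).
Proof. reflexivity. Qed.

Definition tt (D : diagram) (i j : nat) : bool := sym_eqb (D (Posz i, Posz j)) Ps.

Definition W (t : nat -> nat -> bool) (d i j : nat) : nat :=
  if (i + j < d)%N then
    (if (0 < i)%N then (if (0 < j)%N then 2 * ((t i j == t i.-1 j) && (t i j == t i j.-1))
                        else (t i j == t i.-1 j : nat))
     else if (0 < j)%N then (t i j == t i j.-1 : nat) else 0)%N
  else if i + j == d then
    (if (0 < i)%N then (if (0 < j)%N then (t i.-1 j == t i j.-1 : nat) else 1) else 1)%N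
  else 0%N.

Section Loc.
Variables (D : diagram) (d : nat) (hd : (0 < d)%N) (hK : support_is_triangle D d).

Lemma nzD a b : (a + b < d)%N -> D (Posz a, Posz b) <> Zr.
Proof. move=> h; apply/hK => /=; rewrite -PoszD ltz_nat; auto. Qed.

Lemma zD a b : (d <= a + b)%N -> D (Posz a, Posz b) = Zr.
Proof.
move=> h; case E: (D _) => //; have: D (Posz a, Posz b) <> Zr by rewrite E.
all: by move/hK => [_ [_]] /=; rewrite -PoszD ltz_nat ltnNge h.
Qed.

Lemma zn1 (y : int) : D ((Posz 0 - 1)%R, y) = Zr.
Proof. case E: (D _) => //; have: D ((Posz 0 - 1)%R, y) <> Zr by rewrite E.
all: by move/hK => [] /=. Qed.
Lemma zn2 (y : int) : D (y, (Posz 0 - 1)%R) = Zr.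
Proof. case E: (D _) => //; have: D (y, (Posz 0 - 1)%R) <> Zr by rewrite E.
all: by move/hK => [_ []] /=. Qed.

Lemma m1 i : (Posz i.+1 - 1 = Posz i)%R.
Proof. by rewrite intS addrC addKr. Qed.

Lemma nzc x : x <> Zr -> x = Ps \/ x = Ng.
Proof. by case: x; auto. Qed.

Ltac dest := repeat match goal with H : D _ <> Zr |- _ => case/nzc: H => -> end.

Lemma local i j :
  F3 (D (Posz i, Posz j)) (D (Posz i - 1, Posz j)%R) (D (Posz i, Posz j - 1)%R)
  = (W (tt D) d i j + G3 (D (Posz i, Posz j)) (D (Posz i - 1, Posz j)%R) (D (Posz i, Posz j - 1)%R))%N.
Proof.
rewrite /W /tt.
case: i => [|i]; case: j => [|j]; rewrite ?m1 ?zn1 ?zn2 /=.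
- rewrite add0n hd. have := nzD 0 0 hd. move=> H; dest; by [].
- have [h|h|h] := ltngtP (0 + j.+1) d.
  + have := nzD _ _ h; have := nzD 0 j (ltac:(lia)). move=> H1 H2; dest; by [].
  + rewrite (zD 0 j.+1) ?(zD 0 j) /=; try lia. by [].
  + rewrite (zD 0 j.+1); last lia. have := nzD 0 j (ltac:(lia)) => H; dest; by [].
- have [h|h|h] := ltngtP (i.+1 + 0) d.
  + have := nzD _ _ h; have := nzD i 0 (ltac:(lia)). move=> H1 H2; dest; by [].
  + rewrite (zD i.+1 0) ?(zD i 0) /=; try lia. by [].
  + rewrite (zD i.+1 0); last lia. have := nzD i 0 (ltac:(lia)) => H; dest; by [].
- have [h|h|h] := ltngtP (i.+1 + j.+1) d.
  + have := nzD _ _ h; have := nzD i j.+1 (ltac:(lia)); have := nzD i.+1 j (ltac:(lia)).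
    move=> H1 H2 H3; dest; by [].
  + rewrite (zD i.+1 j.+1) ?(zD i j.+1) ?(zD i.+1 j) /=; try lia. by [].
  + rewrite (zD i.+1 j.+1); last lia.
    have := nzD i j.+1 (ltac:(lia)); have := nzD i.+1 j (ltac:(lia)).
    move=> H1 H2; dest; by [].
Qed.
End Loc.

Definition Lay (f : nat -> nat -> nat) k := \sum_(0 <= i < k.+1) f i (k - i).

Lemma tri_layers (f : nat -> nat -> nat) n :
  \sum_(0 <= i < n.+1) \sum_(0 <= j < n.+1 - i) f i j = \sum_(0 <= k < n.+1) Lay f k.
Proof.
elim: n => [|n IH].
  by rewrite /Lay big_nat1 subn0 !big_nat1.
rewrite big_nat_recr //= [in RHS]big_nat_recr //= -IH.
rewrite subSnn big_nat1 /Lay [X in _ = _ + X]big_nat_recr // subnn addnA; congr (_ + _).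
rewrite -big_split /=; rewrite !big_nat; apply: eq_bigr => i /andP [_ hi].
by rewrite subSn ?(ltnW hi) // big_nat_recr.
Qed.

Lemma box_tri (f : nat -> nat -> nat) n : (forall i j, n < i + j -> f i j = 0) ->
  \sum_(0 <= i < n.+1) \sum_(0 <= j < n.+1) f i j =
  \sum_(0 <= i < n.+1) \sum_(0 <= j < n.+1 - i) f i j.
Proof.
move=> hf; rewrite !big_nat; apply: eq_bigr => i /andP [_ hi].
rewrite (big_cat_nat _ (n := n.+1 - i)) ?leq_subr //=.
rewrite -[RHS]addn0; congr (_ + _); rewrite big_nat_cond big1 // => j /andP [/andP [h1 h2] _].
apply: hf; lia.
Qed.

Section Comb.
Variables (t : nat -> nat -> bool) (d : nat) (hd : 0 < d).

Definition cc k := \sum_(0 <= i < k) (t i (k - i) != t i.+1 (k - i.+1) : nat).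

Lemma W_gt i j : d < i + j -> W t d i j = 0.
Proof. by move=> h; rewrite /W ltnNge (ltnW h) /= gtn_eqF. Qed.
Lemma W_int i j : i + j < d -> 0 < i -> 0 < j ->
  W t d i j = 2 * ((t i j == t i.-1 j) && (t i j == t i j.-1)).
Proof. by move=> h hi hj; rewrite /W h hi hj. Qed.
Lemma W_left j : j < d -> 0 < j -> W t d 0 j = (t 0 j == t 0 j.-1).
Proof. by move=> h hj; rewrite /W add0n h hj. Qed.
Lemma W_bot i : i < d -> 0 < i -> W t d i 0 = (t i 0 == t i.-1 0).
Proof. by move=> h hi; rewrite /W addn0 h hi. Qed.
Lemma W_hyp i j : i + j = d -> 0 < i -> 0 < j -> W t d i j = (t i.-1 j == t i j.-1).
Proof. by move=> h hi hj; rewrite /W h ltnn eqxx hi hj. Qed.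
Lemma W_c1 : W t d 0 d = 1.
Proof. by rewrite /W add0n ltnn eqxx. Qed.
Lemma W_c2 : W t d d 0 = 1.
Proof. by rewrite /W addn0 ltnn eqxx; case: (0 < d). Qed.

Lemma layer0 : Lay (W t d) 0 = 0.
Proof. by rewrite /Lay big_nat1 /W add0n hd. Qed.

Lemma layer_step m : m.+1 < d -> cc m.+1 <= Lay (W t d) m.+1 + cc m.
Proof.
move=> hm.
pose A i := (t i (m.+1 - i) == t i (m - i) : nat).
pose B i := (t i.+1 (m - i) == t i (m - i) : nat).
have h1 : cc m.+1 <= \sum_(0 <= i < m.+1) (A i + B i).
  rewrite /cc !big_nat; apply: leq_sum => i /andP [_ hi]; rewrite subSS /A /B.
  by case: (t i (m.+1 - i)); case: (t i.+1 (m - i)); case: (t i (m - i)).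
have hA : A 0 = W t d 0 (m.+1 - 0).
  rewrite subn0 W_left //; by rewrite /A !subn0.
have hB : B m = W t d m.+1 (m.+1 - m.+1).
  by rewrite subnn W_bot // /B subnn.
have hM : \sum_(0 <= i < m) (A i.+1 + B i) <=
          \sum_(0 <= i < m) W t d i.+1 (m.+1 - i.+1) + cc m.
  rewrite /cc -big_split !big_nat; apply: leq_sum => i /andP [_ hi] /=.
  rewrite /A /B subSS W_int /=; [|lia|by []|lia].
  rewrite -subnS.
  by case: (t i.+1 (m - i)); case: (t i (m - i)); case: (t i.+1 (m - i.+1)).
move: h1; rewrite big_split /= big_nat_recl // [X in _ + X]big_nat_recr //=.
rewrite /Lay big_nat_recl // big_nat_recr //= -hA -hB.
rewrite big_split /= in hM; lia.
Qed.

Lemma layer_last m : d = m.+1 -> Lay (W t d) m.+1 + cc m = m.+2.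
Proof.
move=> hdm.
rewrite /Lay big_nat_recl // big_nat_recr //= subn0 subnn -hdm W_c1 W_c2.
have E : \sum_(0 <= i < m) W t d i.+1 (m.+1 - i.+1) + cc m = m.
  rewrite /cc -big_split /=.
  rewrite (eq_big_nat _ _ (F2 := fun _ => 1)); last first.
    move=> i /andP [_ hi]; rewrite subSS W_hyp //=; [|lia|lia].
    rewrite -subnS.
    by case: (t i (m - i)); case: (t i.+1 (m - i.+1)).
  by rewrite sum_nat_const_nat muln1 subn0.
move: E; rewrite hdm; lia.
Qed.

Lemma tele k : k < d -> cc k <= \sum_(0 <= k' < k.+1) Lay (W t d) k'.
Proof.
elim: k => [|k IH] hk.
  by rewrite /cc big_geq.
rewrite big_nat_recr //=.
have := layer_step k hk; have := IH (ltnW hk); lia.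
Qed.

Lemma sumW : d.+1 <= \sum_(0 <= k < d.+1) Lay (W t d) k.
Proof.
case E: d hd => [//|m] _.
rewrite big_nat_recr //=.
have := tele m (ltac:(rewrite E; done)); have := layer_last m E. rewrite E. lia.
Qed.
End Comb.

Theorem mainTheorem8 (D : diagram) (d : nat) (hd : (1 <= d)%N)
  (hK : support_is_triangle D d) :
  (((d.+1)%:R / 2%:R : rat) <= SC D d)%R.
Proof.
have loc i j : (2 * is_interior D (Posz i, Posz j) + is_edge D (Posz i, Posz j)
   + is_vertex D (Posz i, Posz j) = W (tt D) d i j + is_bottom D (Posz i, Posz j))%N.
  by rewrite key3 keyb (local D d hd hK).
pose SW := (\sum_(i < d.+1) \sum_(j < d.+1) W (tt D) d i j)%N.
have Hsum : (2 * count_box (is_interior D) d + count_box (is_edge D) d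
   + count_box (is_vertex D) d = SW + count_box (is_bottom D) d)%N.
  rewrite /SW /count_box big_distrr -!big_split; apply: eq_bigr => i _ /=.
  rewrite big_distrr -!big_split; apply: eq_bigr => j _; exact: loc.
have HW : (d.+1 <= SW)%N.
  have -> : SW = (\sum_(0 <= i < d.+1) \sum_(0 <= j < d.+1) W (tt D) d i j)%N.
    rewrite /SW big_mkord; apply: eq_bigr => i _; by rewrite big_mkord.
  rewrite box_tri; last by move=> i j h; apply: W_gt.
  by rewrite tri_layers; apply: sumW.
have H1 := congr1 (fun n => n%:R : rat) Hsum; rewrite /= !natrD in H1.
have H2 : ((d.+1)%:R <= SW%:R :> rat)%R by rewrite ler_nat.
rewrite /SC; lra.
Qed.
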